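(* Let $\gamma\in(0,1)$, and let $\hat c^1,\hat c^2,\dots$ be i.i.d. real random variables with mean $c$ and variance $\sigma^2\in(0,\infty)$. Fix $n\ge2$ and deterministic stepsizes $\alpha_0,\dots,\alpha_{n-2}\in[0,1]$. Define $\bar v^0=0$ and, for $1\le m\le n-1$, $\hat v^m=\hat c^m+\gamma\bar v^{m-1}$, $\bar v^m=(1-\alpha_{m-1})\bar v^{m-1}+\alpha_{m-1}\hat v^m$; let $\hat v^n=\hat c^n+\gamma\bar v^{n-1}$ and, for $a\in\mathbb{R}$, $\bar v^n(a)=(1-a)\bar v^{n-1}+a\hat v^n$. Define $\delta^1=\alpha_0$, $\lambda^1=\alpha_0^2$ and, for $1<m\le n-1$, $\delta^m=\alpha_{m-1}+(1-(1-\gamma)\alpha_{m-1})\delta^{m-1}$, $\lambda^m=\alpha_{m-1}^2+(1-(1-\gamma)\alpha_{m-1})^2\lambda^{m-1}$. Then the value of $a\in[0,1]$ minimizing $\mathbb{E}\big[(\bar v^n(a)-\mathbb{E}\hat v^n)^2\big]$ is $$\alpha_{n-1}=\frac{(1-\gamma)\lambda^{n-1}\sigma^2+\big(1-(1-\gamma)\delta^{n-1}\big)^2c^2}{(1-\gamma)^2\lambda^{n-1}\sigma^2+\big(1-(1-\gamma)\delta^{n-1}\big)^2c^2+\sigma^2}.$$ *)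

(* Defs.v *)
From HB Require Import structures.
From mathcomp Require Import all_boot all_order all_algebra.
From mathcomp Require Import all_classical all_reals all_analysis.
Set Implicit Arguments. Unset Strict Implicit. Unset Printing Implicit Defensive.
Import Order.TTheory GRing.Theory Num.Theory.
Local Open Scope classical_set_scope.
Local Open Scope ring_scope.

Definition mutually_independent d (T : measurableType d) (R : realType)
  (P : probability T R) (Y : nat -> {RV P >-> R}) : Prop :=
  forall (s : seq nat) (B : nat -> set R),
    uniq s -> (forall i, measurable (B i)) ->
    P (\bigcap_(i in [set j | j \in s]) (Y i @^-1` B i)) =
    (\prod_(i <- s) P (Y i @^-1` B i))%E.

Definition identically_distributed d (T : measurableType d) (R : realType)
  (P : probability T R) (Y : nat -> {RV P >-> R}) : Prop :=
  forall i j (A : set R), measurable A ->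
    distribution P (Y i) A = distribution P (Y j) A.

Definition iid d (T : measurableType d) (R : realType)
  (P : probability T R) (Y : nat -> {RV P >-> R}) : Prop :=
  mutually_independent Y /\ identically_distributed Y.

Section defs.
Context d (T : measurableType d) (R : realType) (P : probability T R).
Variables (gamma : R) (alpha : nat -> R) (chat : nat -> {RV P >-> R}).

Fixpoint vbar (m : nat) : T -> R :=
  match m with
  | 0 => fun _ => 0
  | m'.+1 => fun t =>
      (1 - alpha m') * vbar m' t + alpha m' * (chat m'.+1 t + gamma * vbar m' t)
  end.

Definition vhat (m : nat) : T -> R := fun t => chat m t + gamma * vbar m.-1 t.

Definition vbar_a (n : nat) (a : R) : T -> R :=
  fun t => (1 - a) * vbar n.-1 t + a * vhat n t.
End defs.

(* delta^m and lambda^m; with delta^0 = lambda^0 = 0 the recursion gives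
   delta^1 = alpha_0 and lambda^1 = alpha_0^2 as in the paper. *)
Fixpoint delta (R : realType) (gamma : R) (alpha : nat -> R) (m : nat) : R :=
  match m with
  | 0 => 0
  | m'.+1 => alpha m' + (1 - (1 - gamma) * alpha m') * delta gamma alpha m'
  end.

Fixpoint lambda (R : realType) (gamma : R) (alpha : nat -> R) (m : nat) : R :=
  match m with
  | 0 => 0
  | m'.+1 => alpha m' ^+ 2
             + (1 - (1 - gamma) * alpha m') ^+ 2 * lambda gamma alpha m'
  end.

(* Main.v *)
Require Import Defs.
From HB Require Import structures.
From mathcomp Require Import all_boot all_order all_algebra.
From mathcomp Require Import all_classical all_reals all_analysis.
From mathcomp Require Import measurable_realfun.
From mathcomp Require Import ring lra zify.
Import Order.TTheory GRing.Theory Num.Theory.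
Local Open Scope classical_set_scope.
Local Open Scope ring_scope.

Section indep.
Context d (T : measurableType d) (R : realType) (P : probability T R).
Variables (X Y : {RV P >-> R}).
Definition pairf : T -> R * R := fun t => (X t, Y t).
Lemma pairf_meas : measurable_fun setT pairf.
Proof. exact: measurable_fun_pair. Qed.
HB.instance Definition _ := isMeasurableFun.Build _ _ _ _ pairf pairf_meas.

Local Open Scope ereal_scope.
Lemma indep_expect :
  (forall A B, measurable A -> measurable B ->
     P (X @^-1` A `&` Y @^-1` B) = P (X @^-1` A) * P (Y @^-1` B)) ->
  (X : T -> R) \in Lfun P 2%:E -> (Y : T -> R) \in Lfun P 2%:E ->
  'E_P[(X : T -> R) * (Y : T -> R)]%R = 'E_P[X] * 'E_P[Y].
Proof.
move=> indXY X2 Y2.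
have Pfin : P setT \is a fin_num := fin_num_measure P _ measurableT.
have X1 := Lfun_subset12 Pfin X2.
have Y1 := Lfun_subset12 Pfin Y2.
have XY1 := Lfun2_mul_Lfun1 X2 Y2.
pose Z : {RV P >-> (R * R)%type} := pairf.
pose f (z : R * R) := (z.1 * z.2)%:E.
have mf : measurable_fun [set: (R * R)%type] f.
  by apply/measurable_EFinP; apply: measurable_funM.
have iXY : P.-integrable setT (f \o Z).
  by move/Lfun1_integrable : XY1.
have muE : forall A, measurable A ->
    (distribution P X \x distribution P Y) A = distribution P Z A.
  apply: product_measure_unique => A B mA mB.
  by rewrite /distribution /pushforward -indXY.
transitivity (\int[P]_x (f \o Z) x); first by rewrite unlock.
rewrite -integral_distribution //.
rewrite (eq_measure_integral (distribution P X \x distribution P Y)); last first.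
  by move=> A mA _; exact/esym/muE.
have iZ : (distribution P Z).-integrable setT f.
  apply: integrable_pushforward => //.
have ip : (distribution P X \x distribution P Y).-integrable setT f.
  apply/integrableP; split => //.
  rewrite (eq_measure_integral (distribution P Z)); last first.
    by move=> A mA _; exact: muE.
  by case/integrableP: iZ.
have iY : (distribution P Y).-integrable setT EFin.
  apply: integrable_pushforward => //.
  by move/Lfun1_integrable : Y1.
have iX : (distribution P X).-integrable setT EFin.
  apply: integrable_pushforward => //.
  by move/Lfun1_integrable : X1.
rewrite -integral12_prod_meas1 //.
rewrite /fubini_F.
have EY : \int[distribution P Y]_y (y%:E) = 'E_P[Y].
  by rewrite unlock integral_distribution //; move/Lfun1_integrable : Y1.
have EX : \int[distribution P X]_y (y%:E) = 'E_P[X].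
  by rewrite unlock integral_distribution //; move/Lfun1_integrable : X1.
have EYf : 'E_P[Y] = (fine 'E_P[Y])%:E by rewrite fineK // expectation_fin_num.
transitivity (\int[distribution P X]_x (x%:E * (fine 'E_P[Y])%:E)).
  apply: eq_integral => x _.
  rewrite /f /= (eq_integral (fun y => x%:E * y%:E)) //.
  by rewrite integralZl // EY EYf.
by rewrite integralZr // EX EYf.
Qed.
End indep.

Section main.
Context d (T : measurableType d) (R : realType) (P : probability T R).
Variables (chat : nat -> {RV P >-> R}) (gamma c sigma : R) (alpha : nat -> R).
Hypothesis hiid : iid (fun i => chat i.+1).
Hypothesis h2 : forall m, (1 <= m)%N -> (chat m : T -> R) \in Lfun P 2%:E.
Hypothesis hE : forall m, (1 <= m)%N -> ('E_P[chat m] = c%:E)%E.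
Hypothesis hV : forall m, (1 <= m)%N -> 'V_P[chat m] = (sigma ^+ 2)%:E.

Let Pfin : P setT \is a fin_num := fin_num_measure P _ measurableT.

Lemma pair_indep k l : k != l -> forall A B, measurable A -> measurable B ->
  P (chat k.+1 @^-1` A `&` chat l.+1 @^-1` B) =
  (P (chat k.+1 @^-1` A) * P (chat l.+1 @^-1` B))%E.
Proof.
move=> kl A B mA mB.
have [ind _] := hiid.
have := ind [:: k; l] (fun i => if i == k then A else B).
rewrite /= inE andbT kl => /(_ isT).
have mB' : forall i, measurable ((fun i => if i == k then A else B) i).
  by move=> i; case: ifP.
move=> /(_ mB'); rewrite !big_cons big_nil mule1 eqxx eq_sym (negbTE kl) => <-.
congr (P _); apply/seteqP; split => [t [tA tB] i /=|t H].
- by rewrite !inE => /orP[]/eqP->; rewrite ?eqxx // eq_sym (negbTE kl).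
- split.
  + by have := H k; rewrite /= eqxx; apply; rewrite !inE eqxx.
  + by have := H l; rewrite /= eq_sym (negbTE kl); apply; rewrite !inE eqxx orbT.
Qed.


Lemma cov_pair k l : k != l -> covariance P (chat k.+1) (chat l.+1) = 0%E.
Proof.
move=> kl.
have X2 := h2 k.+1 isT; have Y2 := h2 l.+1 isT.
rewrite covarianceE; [|exact: Lfun_subset12|exact: Lfun_subset12|exact: Lfun2_mul_Lfun1].
rewrite indep_expect //; last exact: pair_indep.
rewrite subee // fin_numM // expectation_fin_num // Lfun_subset12 //.
Qed.

Lemma mulL1 [f g : T -> R] : f \in Lfun P 2%:E -> g \in Lfun P 2%:E ->
  (f * g)%R \in Lfun P 1.
Proof. exact: Lfun2_mul_Lfun1. Qed.

Lemma L21 [f : T -> R] : f \in Lfun P 2%:E -> f \in Lfun P 1.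
Proof. exact: Lfun_subset12. Qed.

Lemma L2D [f g : T -> R] : f \in Lfun P 2%:E -> g \in Lfun P 2%:E ->
  (f \+ g)%R \in Lfun P 2%:E.
Proof. by move=> hf hg; rewrite rpredD ?lee1n. Qed.

Lemma L2Bc [f : T -> R] k : f \in Lfun P 2%:E -> (f \- cst k)%R \in Lfun P 2%:E.
Proof. by move=> hf; rewrite rpredB ?lee1n // => ?; exact: Lfun_cst. Qed.

Notation vb := (vbar gamma alpha chat).
Let beta m := 1 - (1 - gamma) * alpha m.

Lemma vbarE m : vb m.+1 = (beta m \o* vb m \+ alpha m \o* (chat m.+1 : T -> R))%R.
Proof. by apply/funext => t /=; rewrite /beta; ring. Qed.

Lemma vbar_L2 m : vb m \in Lfun P 2%:E.
Proof.
elim: m => [|m IH]; first exact: (Lfun_cst P 0 2).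
rewrite vbarE rpredD ?lee1n //.
- by move=> ?; exact: (Lfun_scale _ (ler1n _ 2) IH).
- by move=> ?; exact: (Lfun_scale _ (ler1n _ 2) (h2 m.+1 isT)).
Qed.

Lemma vbar_L1 m : vb m \in Lfun P 1.
Proof. by rewrite Lfun_subset12 // vbar_L2. Qed.

Lemma E_vbar m : 'E_P[vb m]%E = (c * delta gamma alpha m)%:E.
Proof.
elim: m => [|m IH]; first by rewrite mulr0 (expectation_cst P 0).
rewrite vbarE expectationD ?Lfun_scale ?vbar_L1 ?Lfun_subset12 ?h2 //.
rewrite !expectationZl ?vbar_L1 ?Lfun_subset12 ?h2 // IH hE //.
by rewrite -!EFinM -EFinD /= /beta; congr (_%:E); ring.
Qed.

Lemma cov_vbar m j : (m < j)%N -> covariance P (vb m) (chat j) = 0%E.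
Proof.
elim: m j => [|m IH] j mj.
  exact: (covariance_cst_l P 0).
case: j mj => // j mj.
have Xj := h2 j.+1 isT.
rewrite vbarE covarianceDl ?Lfun_scale ?vbar_L2 ?h2 // ?ler1n //.
rewrite (@covarianceZl _ _ _ P _ _ _ (L21 (vbar_L2 m)) (L21 Xj) (mulL1 (vbar_L2 m) Xj)).
rewrite (@covarianceZl _ _ _ P _ _ _ (L21 (h2 m.+1 isT)) (L21 Xj) (mulL1 (h2 m.+1 isT) Xj)).
have mj' : (m < j)%N by [].
rewrite (IH j.+1) ?(ltn_trans (ltnSn m)) // cov_pair ?mule0 ?adde0 //.
by rewrite neq_ltn mj'.
Qed.

Lemma V_vbar m : 'V_P[vb m] = (sigma ^+ 2 * lambda gamma alpha m)%:E.
Proof.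
elim: m => [|m IH]; first by rewrite mulr0 (variance_cst P 0).
have X2 := vbar_L2 m; have Y2 := h2 m.+1 isT.
have s1 := Lfun_scale (beta m) (ler1n _ 2) X2.
have s2 := Lfun_scale (alpha m) (ler1n _ 2) Y2.
rewrite vbarE (varianceD s1 s2) (varianceZ _ X2) (varianceZ _ Y2) IH hV //.
rewrite (@covarianceZl _ _ _ P _ _ _ (L21 X2) (L21 s2) (mulL1 X2 s2)).
rewrite (@covarianceZr _ _ _ P _ _ _ (L21 X2) (L21 Y2) (mulL1 X2 Y2)).
rewrite cov_vbar // !mule0 adde0 -!EFinM -EFinD /= /beta; congr (_%:E); ring.
Qed.

Lemma J_formula N a :
  'E_P[fun t => ((vbar_a gamma alpha chat N.+1 a t
                   - fine 'E_P[vhat gamma alpha chat N.+1]) ^+ 2)%R]%E =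
  ((1 - (1 - gamma) * a) ^+ 2 * (sigma ^+ 2 * lambda gamma alpha N)
   + a ^+ 2 * sigma ^+ 2
   + ((1 - (1 - gamma) * a) * (c * delta gamma alpha N) + a * c
      - (c + gamma * (c * delta gamma alpha N))) ^+ 2)%:E.
Proof.
have X2 := vbar_L2 N; have Y2 := h2 N.+1 isT.
have -> : vhat gamma alpha chat N.+1 =
    ((chat N.+1 : T -> R) \+ gamma \o* vb N)%R.
  by apply/funext => t; rewrite /vhat /= mulrC.
rewrite expectationD ?L21 // ?Lfun_scale ?ler1n //.
rewrite expectationZl ?L21 // hE // E_vbar -EFinM -EFinD /=.
set m0 := (c + gamma * (c * delta gamma alpha N)).
set b := 1 - (1 - gamma) * a.
have s1 := Lfun_scale b (ler1n _ 2) X2.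
have s2 := Lfun_scale a (ler1n _ 2) Y2.
pose W := (b \o* vb N \+ a \o* (chat N.+1 : T -> R))%R.
have W2 : W \in Lfun P 2%:E by exact: L2D.
have U2 : (W \- cst m0)%R \in Lfun P 2%:E by exact: L2Bc.
have -> : (fun t => ((vbar_a gamma alpha chat N.+1 a t - m0) ^+ 2)%R) =
    ((W \- cst m0) ^+ 2)%R.
  by apply/funext => t; rewrite exprfctE /W /vbar_a /vhat /b /=; congr (_ ^+ 2); ring.
have := varianceE U2.
rewrite (varianceB_cst_r _ W2) => hVU.
have EU : 'E_P[(W \- cst m0)%R]%E = (b * (c * delta gamma alpha N) + a * c - m0)%:E.
  rewrite expectationB ?L21 ?Lfun_cst // expectation_cst.
  rewrite expectationD ?L21 // !expectationZl ?L21 // E_vbar hE //.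
have VW : 'V_P[W] = (b ^+ 2 * (sigma ^+ 2 * lambda gamma alpha N) + a ^+ 2 * sigma ^+ 2)%:E.
  rewrite (varianceD s1 s2) (varianceZ _ X2) (varianceZ _ Y2) V_vbar hV //.
  rewrite (@covarianceZl _ _ _ P _ _ _ (L21 X2) (L21 s2) (mulL1 X2 s2)).
  rewrite (@covarianceZr _ _ _ P _ _ _ (L21 X2) (L21 Y2) (mulL1 X2 Y2)).
  by rewrite cov_vbar // !mule0 adde0 -!EFinM -EFinD.
have fin2 : 'E_P[((W \- cst m0) ^+ 2)%R]%E \is a fin_num.
  by apply: expectation_fin_num; rewrite expr2; exact: mulL1.
move: hVU; rewrite VW EU -(fineK fin2) -EFin_expe -EFinB => -[h].
by congr (_%:E); lra.
Qed.
End main.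

Lemma lambda_bound (R : realType) (gamma : R) (alpha : nat -> R) N :
  0 < gamma < 1 -> (forall i, (i < N)%N -> 0 <= alpha i <= 1) ->
  0 <= lambda gamma alpha N /\ (1 - gamma ^+ 2) * lambda gamma alpha N <= 1.
Proof.
move=> /andP[g0 g1]; elim: N => [|N IH] ha /=; first by rewrite mulr0 ler01.
have [L0 L1] := IH (fun i iN => ha i (ltnW iN)).
have /andP[a0 a1] := ha N (ltnSn N).
set L := lambda gamma alpha N.
split; first by rewrite addr_ge0 ?sqr_ge0 // mulr_ge0 // sqr_ge0.
set be := 1 - (1 - gamma) * alpha N.
have key : alpha N ^+ 2 * (1 - gamma ^+ 2) + be ^+ 2 <= 1.
  have e : alpha N ^+ 2 * (1 - gamma ^+ 2) + be ^+ 2 - 1 = 2 * (1 - gamma) * (alpha N * (alpha N - 1)).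
    by rewrite /be; ring.
  rewrite -subr_le0 e; apply: mulr_ge0_le0; first by apply: mulr_ge0 => //; lra.
  by apply: mulr_ge0_le0 => //; lra.
have : (1 - gamma ^+ 2) * (be ^+ 2 * L) <= be ^+ 2.
  rewrite mulrCA -[X in _ <= X]mulr1; apply: ler_wpM2l; first exact: sqr_ge0.
  exact: L1.
move=> h; rewrite mulrDr; lra.
Qed.

Theorem theorem3 (d : measure_display) (T : measurableType d) (R : realType)
  (P : probability T R) (chat : nat -> {RV P >-> R})
  (gamma c sigma : R) (n : nat) (alpha : nat -> R) :
  0 < gamma < 1 ->
  iid (fun i => chat i.+1) ->
  (forall m, (1 <= m)%N -> (chat m : T -> R) \in Lfun P 2%:E) ->
  (forall m, (1 <= m)%N -> ('E_P[chat m] = c%:E)%E) ->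
  (forall m, (1 <= m)%N -> 'V_P[chat m] = (sigma ^+ 2)%:E) ->
  0 < sigma ->
  (2 <= n)%N ->
  (forall i, (i <= n - 2)%N -> 0 <= alpha i <= 1) ->
  let J := fun a : R =>
    ('E_P[fun t => ((vbar_a gamma alpha chat n a t
                   - fine 'E_P[vhat gamma alpha chat n]) ^+ 2)%R])%E in
  let del := delta gamma alpha n.-1 in
  let lam := lambda gamma alpha n.-1 in
  let astar :=
    ((1 - gamma) * lam * sigma ^+ 2 + (1 - (1 - gamma) * del) ^+ 2 * c ^+ 2) /
    ((1 - gamma) ^+ 2 * lam * sigma ^+ 2 + (1 - (1 - gamma) * del) ^+ 2 * c ^+ 2
     + sigma ^+ 2) in
  0 <= astar <= 1 /\
  (forall a : R, 0 <= a <= 1 -> a != astar -> (J astar < J a)%E).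
Proof.
move=> hg hiid h2 hE hV hs hn ha.
case: n hn ha => [|N] // hn ha J del lam astar.
have hA : forall i, (i < N)%N -> 0 <= alpha i <= 1.
  by move=> i iN; apply: ha; lia.
have [L0' L1'] := @lambda_bound R gamma alpha N hg hA.
have L1 : (1 - gamma ^+ 2) * lam <= 1 := L1'.
have L0 : 0 <= lam := L0'.
have JE : forall a, J a = ((1 - (1 - gamma) * a) ^+ 2 * (sigma ^+ 2 * lam)
   + a ^+ 2 * sigma ^+ 2
   + ((1 - (1 - gamma) * a) * (c * del) + a * c
      - (c + gamma * (c * del))) ^+ 2)%:E.
  by move=> a; rewrite /J (@J_formula _ _ _ P chat gamma c sigma alpha hiid h2 hE hV).
have /andP[g0 g1] := hg.
set s := sigma ^+ 2.
set D := 1 - (1 - gamma) * del.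
set A := (1 - gamma) ^+ 2 * lam * s + D ^+ 2 * c ^+ 2 + s.
set B := (1 - gamma) * lam * s + D ^+ 2 * c ^+ 2.
have s0 : 0 < s by rewrite /s exprn_gt0.
have A0 : 0 < A.
  rewrite /A; apply: ltr_pwDr => //.
  apply: addr_ge0; last by apply: mulr_ge0; exact: sqr_ge0.
  by rewrite -mulrA mulr_ge0 ?sqr_ge0 // mulr_ge0 // ltW.
have B0 : 0 <= B.
  apply: addr_ge0; last by apply: mulr_ge0; exact: sqr_ge0.
  by rewrite -mulrA mulr_ge0 ?mulr_ge0 ?(ltW s0) //; lra.
have BA : B <= A.
  rewrite /A /B.
  have : gamma * (1 - gamma) * lam <= 1.
    have : gamma * (1 - gamma) * lam <= (1 - gamma ^+ 2) * lam.
      apply: ler_wpM2r => //; nra.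
    lra.
  move=> h.
  have : (1 - gamma) * lam * s <= (1 - gamma) ^+ 2 * lam * s + s.
    have e : (1 - gamma) ^+ 2 * lam * s + s - (1 - gamma) * lam * s
           = s * (1 - gamma * (1 - gamma) * lam) by ring.
    rewrite -subr_ge0 e; apply: mulr_ge0; lra.
  lra.
have astarE : astar = B / A by [].
split.
  rewrite astarE divr_ge0 ?(ltW A0) //=.
  by rewrite ler_pdivrMr // mul1r.
move=> a /andP[a0 a1] aNa.
rewrite !JE lte_fin.
have key : forall x, (1 - (1 - gamma) * x) ^+ 2 * (s * lam) + x ^+ 2 * s
   + ((1 - (1 - gamma) * x) * (c * del) + x * c - (c + gamma * (c * del))) ^+ 2
   = A * x ^+ 2 - 2 * B * x + (lam * s + D ^+ 2 * c ^+ 2).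
  by move=> x; rewrite /A /B /D; ring.
rewrite !key.
have Aas : A * astar = B by rewrite astarE mulrC divfK // gt_eqF.
rewrite -subr_gt0.
have -> : A * a ^+ 2 - 2 * B * a + (lam * s + D ^+ 2 * c ^+ 2) -
  (A * astar ^+ 2 - 2 * B * astar + (lam * s + D ^+ 2 * c ^+ 2))
  = A * (a - astar) ^+ 2 + 2 * (A * astar - B) * (a - astar) by ring.
rewrite Aas subrr mulr0 mul0r addr0.
by rewrite mulr_gt0 // exprn_even_gt0 // subr_eq0.
Qed.
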